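(* (1) $R\setminus K_\Gamma$ is a countable set. (2) There is $M\in\mathrm{GL}(3,\mathbb R)$ such that every matrix $M^{-1}BM$, $B\in\Gamma$, has all entries strictly positive and determinant one, and there is $c>0$ such that for every $B\in\Gamma$, $\min_{j,k}(M^{-1}BM)_{jk}/\max_{j,k}(M^{-1}BM)_{jk}\ge c$.
   Context: Let $A_1=\begin{pmatrix}1&1&1\\0&1&0\\0&0&1\end{pmatrix}$, $A_2=\begin{pmatrix}1&0&0\\1&1&1\\0&0&1\end{pmatrix}$, $A_3=\begin{pmatrix}1&0&0\\0&1&0\\1&1&1\end{pmatrix}$, $S=\{(x,y,z):x,y,z\ge0,x+y+z=1\}$, and $f_i(v)=A_iv/(\text{sum of coordinates of }A_iv)$ on $S$. The Rauzy gasket $R$ is the unique nonempty compact $R\subset S$ with $R=\bigcup_if_i(R)$; for $\omega\in\{1,2,3\}^{\mathbb N}$, $\Pi(\omega)$ denotes the unique point of $\bigcap_n f_{\omega_1}\circ\cdots\circ f_{\omega_n}(S)$, so $R=\Pi(\{1,2,3\}^{\mathbb N})$. Let $\Gamma=\{A_i^nA_j: i\ne j\in\{1,2,3\},\ n\ge1\}$ and let $K_\Gamma=\Pi(\Sigma')$, where $\Sigma'$ is the set of sequences in $\{1,2,3\}^{\mathbb N}$ that are infinite concatenations of blocks $i^nj$ ($i\ne j$, $n\ge1$), i.e. the limit set of the infinite system $\{f_{B}\}_{B\in\Gamma}$. *)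

(* Defs.v *)
From HB Require Import structures.
From mathcomp Require Import all_boot all_order all_algebra.
From mathcomp Require Import all_classical all_reals.
Set Implicit Arguments. Unset Strict Implicit. Unset Printing Implicit Defensive.
Import Order.TTheory GRing.Theory Num.Theory.
Local Open Scope ring_scope.
Local Open Scope classical_set_scope.

(* The positions a, ..., b-1 of w form a block i^n j with i <> j, n >= 1. *)
Definition is_block (w : nat -> 'I_3) (a b : nat) : Prop :=
  (a.+2 <= b)%N /\ (forall m, (a <= m < b.-1)%N -> w m = w a) /\ w b.-1 != w a.

Definition Sigma' (w : nat -> 'I_3) : Prop :=
  exists t : nat -> nat, t 0%N = 0%N /\ forall k, is_block w (t k) (t k.+1).

Section Rauzy.
Variable R : realType.

(* Points of R^3 are column vectors; coordinates 1,2,3 of the paper are 0,1,2. *)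
Definition simplex : set 'cV[R]_3 :=
  [set v | (forall i, 0 <= v i ord0) /\ \sum_(i < 3) v i ord0 = 1].

Definition Amat (i : 'I_3) : 'M[R]_3 :=
  \matrix_(j, k) (if j == i then 1 else (j == k)%:R).

Definition fmap (i : 'I_3) (v : 'cV[R]_3) : 'cV[R]_3 :=
  (\sum_(j < 3) (Amat i *m v) j ord0)^-1 *: (Amat i *m v).

(* f_{w_1} o ... o f_{w_n} (sequences indexed from 0) *)
Fixpoint fcomp (w : nat -> 'I_3) (n : nat) : 'cV[R]_3 -> 'cV[R]_3 :=
  match n with
  | 0 => id
  | n'.+1 => fcomp w n' \o fmap (w n')
  end.

Definition IsPi (w : nat -> 'I_3) (x : 'cV[R]_3) : Prop :=
  forall n, (fcomp w n @` simplex) x.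

Definition rauzy_gasket : set 'cV[R]_3 := [set x | exists w, IsPi w x].

Definition Gamma : set 'M[R]_3 :=
  [set B | exists (i j : 'I_3) (n : nat), i != j /\ (0 < n)%N /\
           B = Amat i ^+ n *m Amat j].

Definition K_Gamma : set 'cV[R]_3 :=
  [set x | exists w, Sigma' w /\ IsPi w x].

Definition mxmax (C : 'M[R]_3) : R :=
  \big[Num.max/C ord0 ord0]_(p : 'I_3 * 'I_3) C p.1 p.2.
Definition mxmin (C : 'M[R]_3) : R :=
  \big[Num.min/C ord0 ord0]_(p : 'I_3 * 'I_3) C p.1 p.2.
End Rauzy.

(* Main.v *)
Require Import Defs.
From HB Require Import structures.
From mathcomp Require Import all_boot all_order all_algebra.
From mathcomp Require Import all_classical all_reals.
From mathcomp Require Import ring lra.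
Set Implicit Arguments. Unset Strict Implicit. Unset Printing Implicit Defensive.
Import Order.TTheory GRing.Theory Num.Theory.
Local Open Scope ring_scope.
Local Open Scope classical_set_scope.

Definition i0 : 'I_3 := @Ordinal 3 0 isT.
Definition i1 : 'I_3 := @Ordinal 3 1 isT.
Definition i2 : 'I_3 := @Ordinal 3 2 isT.
Lemma o0 p : @Ordinal 3 0 p = i0. Proof. exact: val_inj. Qed.
Lemma o1 p : @Ordinal 3 1 p = i1. Proof. exact: val_inj. Qed.
Lemma o2 p : @Ordinal 3 2 p = i2. Proof. exact: val_inj. Qed.
Definition ordE := (o0, o1, o2).

Lemma sum3 (V : zmodType) (F : 'I_3 -> V) : \sum_(k < 3) F k = F i0 + F i1 + F i2.
Proof.
rewrite !big_ord_recr big_ord0 /= add0r; congr (F _ + F _ + F _); exact: val_inj.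
Qed.

Ltac ord3 k := case: k => [[|[|[|?]]] ?] //=; rewrite ?ordE.

Section P1.
Variable R : realType.
Local Notation fm := (@Defs.fmap R).

Lemma simplex3 (v : 'cV[R]_3) : simplex v <->
  [/\ 0 <= v i0 ord0, 0 <= v i1 ord0, 0 <= v i2 ord0 &
      v i0 ord0 + v i1 ord0 + v i2 ord0 = 1].
Proof.
rewrite /simplex /= sum3; split.
  by case=> H S; split => //; apply: H.
case=> h0 h1 h2 S; split => // k; by ord3 k.
Qed.

Lemma fmap_coord i (v : 'cV[R]_3) : simplex v -> forall k,
  fm i v k ord0 = (if k == i then 1 else v k ord0) / (2 - v i ord0).
Proof.
move=> /simplex3 [h0 h1 h2 S] k.
rewrite /Defs.fmap mxE.
have E : forall m, (Amat R i *m v) m ord0 = if m == i then 1 else v m ord0.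
  move=> m; rewrite !mxE sum3 !mxE.
  ord3 i; ord3 m; lra.
rewrite E (eq_bigr _ (fun m _ => E m)).
rewrite mulrC; congr (_ * _); apply: f_equal.
rewrite sum3; clear E; ord3 i; lra.
Qed.

Local Notation fc := (@Defs.fcomp R).
Definition ev (i : 'I_3) : 'cV[R]_3 := \col_k ((k == i)%:R).

Lemma coord_le1 (v : 'cV[R]_3) k : simplex v -> 0 <= v k ord0 <= 1.
Proof. by move=> /simplex3 [h0 h1 h2 S]; ord3 k; apply/andP; split; lra. Qed.

Lemma fmap_simplex i (v : 'cV[R]_3) : simplex v -> simplex (fm i v).
Proof.
move=> Sv; have /andP [a b] := coord_le1 i Sv.
have d0 : 0 < 2 - v i ord0 by lra.
split.
  move=> k; rewrite fmap_coord //; apply: divr_ge0; last lra.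
  by case: ifP => // _; have /andP [] := coord_le1 k Sv.
rewrite (eq_bigr _ (fun k _ => fmap_coord i Sv k)) -mulr_suml.
have -> : \sum_(k < 3) (if k == i then 1 else v k ord0) = 2 - v i ord0.
  clear a b d0; move/simplex3: (Sv) => [h0 h1 h2 S]; rewrite sum3; ord3 i; lra.
by rewrite divff // gt_eqF.
Qed.

Lemma fmap_inj i (v v' : 'cV[R]_3) : simplex v -> simplex v' -> fm i v = fm i v' -> v = v'.
Proof.
move=> Sv Sv' E.
have /andP [a b] := coord_le1 i Sv; have /andP [a' b'] := coord_le1 i Sv'.
have d0 : 0 < 2 - v i ord0 by lra.
have d0' : 0 < 2 - v' i ord0 by lra.
have Ei : v i ord0 = v' i ord0.
  have := congr1 (fun M : 'cV[R]_3 => M i ord0) E; rewrite /= !fmap_coord // eqxx !div1r.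
  by move/invr_inj; lra.
apply/matrixP => k l; rewrite (ord1 l).
have := congr1 (fun M : 'cV[R]_3 => M k ord0) E; rewrite /= !fmap_coord //.
case: eqP => [-> _ //|_]; rewrite Ei; apply: mulIf.
by rewrite invr_eq0 gt_eqF //; lra.
Qed.

Lemma iter_bound i m (z : 'cV[R]_3) : simplex z ->
  simplex (iter m (fm i) z) /\ (m.+1)%:R * (1 - iter m (fm i) z i ord0) <= 1.
Proof.
move=> Sz; elim: m => [|m [Su IH]] /=.
  split => //; have /andP [a b] := coord_le1 i Sz; lra.
split; first exact: fmap_simplex.
rewrite fmap_coord // eqxx div1r.
set u := iter m (fm i) z in Su IH *.
have /andP [a b] := coord_le1 i Su.
set d := 2 - u i ord0.
have d1 : 1 <= d by rewrite /d; lra.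
have de : d^-1 * d = 1 by rewrite mulVf // gt_eqF //; lra.
have e0 : 0 <= d^-1 by rewrite invr_ge0; lra.
set e := d^-1 in de e0 *.
have IH' : (m.+1)%:R * (d - 1) <= 1 by rewrite /d; lra.
have h : 0 <= (1 - (m.+1)%:R * (d - 1)) * e by apply: mulr_ge0 => //; lra.
have -> : (m.+2)%:R = (m.+1)%:R + 1 :> R by rewrite -addn1 natrD.
have hM : (m.+1)%:R * (d * e) = (m.+1)%:R :> R by rewrite mulrC in de; rewrite de mulr1.
nra.
Qed.

Lemma fix_pt i (y : 'cV[R]_3) :
  (forall m, exists z, simplex z /\ y = iter m (fm i) z) -> y = ev i.
Proof.
move=> H.
have Sy : simplex y by have [z [Sz ->]] := H 0%N.
have B : forall m : nat, (m.+1)%:R * (1 - y i ord0) <= 1.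
  by move=> m; have [z [Sz ->]] := H m; case: (iter_bound i m Sz).
have yi : 1 <= y i ord0.
  rewrite leNgt; apply/negP => lt1.
  have d0 : 0 < 1 - y i ord0 by lra.
  have dv : 0 <= (1 - y i ord0)^-1 by rewrite invr_ge0 ltW.
  have := archi_boundP dv.
  set m := Num.Def.archi_bound _ => hm.
  have := B m; rewrite -addn1 natrD.
  have : 1 < m%:R * (1 - y i ord0).
    by rewrite -ltr_pdivrMr // div1r.
  nra.
move/simplex3: Sy => [h0 h1 h2 S].
apply/matrixP => k l; rewrite (ord1 l) mxE.
move: yi; clear H B; ord3 i; ord3 k; lra.
Qed.

Lemma fcomp_simplex w n (v : 'cV[R]_3) : simplex v -> simplex (fc w n v).
Proof. elim: n v => //= n IH v Sv; apply: IH; exact: fmap_simplex. Qed.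

Lemma fcomp_inj w n (v v' : 'cV[R]_3) : simplex v -> simplex v' -> fc w n v = fc w n v' -> v = v'.
Proof.
elim: n v v' => //= n IH v v' Sv Sv' E; apply: (fmap_inj Sv Sv').
by apply: IH; [exact: fmap_simplex | exact: fmap_simplex | exact: E].
Qed.

Lemma fcomp_ext w w' n : (forall k, (k < n)%N -> w k = w' k) -> fc w n = fc w' n.
Proof.
elim: n => //= n IH H; rewrite IH ?H //; move=> k kn; apply: H; exact: ltnW.
Qed.

Lemma fcomp_shift w N m (v : 'cV[R]_3) : (forall k, (N <= k)%N -> w k = w N) ->
  fc w (N + m) v = fc w N (iter m (fm (w N)) v).
Proof.
move=> H; elim: m v => [|m IH] v; first by rewrite addn0.
by rewrite addnS /= IH H ?leq_addr // -iterSr.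
Qed.

Lemma ev_const (w : nat -> 'I_3) : ~ Sigma' w -> exists N, forall m, (N <= m)%N -> w m = w N.
Proof.
move=> nS; apply: contrapT => H; apply: nS.
have ex : forall a, exists m, (a < m)%N /\ w m != w a /\ forall m', (a < m' < m)%N -> w m' = w a.
  move=> a.
  have exP : exists m, (a < m)%N && (w m != w a).
    apply: contrapT => Hn; apply: H; exists a => m am; apply: contrapT => ne; apply: Hn.
    exists m; apply/andP; split; last by apply/eqP.
    by rewrite ltn_neqAle am andbT; apply/eqP => E; apply: ne; rewrite E.
  case: (ex_minnP exP) => m /andP [am ne] mn.
  exists m; split => //; split => // m' /andP [am' m'm].
  apply/eqP; apply: contraTT m'm => ne'; rewrite -leqNgt; apply: mn; by rewrite am'.
have [f Hf] := choice ex.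
exists (fun k => iter k (fun a => (f a).+1) 0%N); split => // k /=.
set a := iter k _ _.
have [h1 [h2 h3]] := Hf a.
split; first by [].
split; last by [].
move=> m /andP [am mb]; case: (ltnP a m) => [am'|ma].
  by apply: h3; rewrite am'.
by have -> : m = a by apply/eqP; rewrite eqn_leq ma am.
Qed.

Definition gmap (p : seq 'I_3 * 'I_3) : 'cV[R]_3 :=
  fc (fun k => nth ord0 p.1 k) (size p.1) (ev p.2).

Lemma part1 : countable (@rauzy_gasket R `\` @K_Gamma R).
Proof.
apply: (sub_countable (B := gmap @` setT)); last first.
  apply: sub_countable (card_image_le gmap setT) _; exact: countableP.
apply: subset_card_le => x [[w Pw] nK].
have nS : ~ Sigma' w by move=> Sw; apply: nK; exists w.
have [N HN] := ev_const nS.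
exists (mkseq w N, w N) => //.
rewrite /gmap /= size_mkseq.
rewrite (@fcomp_ext _ w); last by move=> k kN; rewrite nth_mkseq.
have Hm : forall m, exists v, simplex v /\ fc w N (iter m (fm (w N)) v) = x.
  move=> m; have [v Sv Ev] := Pw (N + m)%N; exists v; split => //.
  by rewrite -fcomp_shift.
have [v0 [Sv0 E0]] := Hm 0%N.
suff -> : ev (w N) = v0 by [].
apply/esym/fix_pt => m; have [v [Sv Ev]] := Hm m; exists v; split => //.
apply: (@fcomp_inj w N) => //.
  by elim: m {Ev} => //= m IH; apply: fmap_simplex.
by rewrite Ev; exact: E0.
Qed.
End P1.

Section P.
Variable R : realType.
Definition Mm : 'M[R]_3 := \matrix_(a, b) ((a == b)%:R * 10 - 1).
Definition Nm : 'M[R]_3 := \matrix_(a, b) (((a == b)%:R * 7 + 1) / 70).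
Definition Emat (i : 'I_3) : 'M[R]_3 := \matrix_(a, b) (if a == i then (b != i)%:R else 0).

Lemma NM : Nm *m Mm = 1%:M.
Proof.
apply/matrixP => a b; rewrite !mxE !big_ord_recr big_ord0 /= !mxE.
by case: a => [[|[|[|?]]] ?] //=; case: b => [[|[|[|?]]] ?] //=; field.
Qed.

Lemma detA i : \det (Amat R i) = 1.
Proof.
rewrite (expand_det_row _ 0) !big_ord_recl big_ord0 /cofactor.
rewrite !(expand_det_row _ 0) !big_ord_recl !big_ord0 /cofactor !det_mx11 !mxE /=.
by case: i => [[|[|[|?]]] ?] //=; ring.
Qed.

Lemma entries (i j a b : 'I_3) : i != j ->
  1/20 <= (Nm *m (Emat i *m Amat R j) *m Mm) a b /\
  1/20 <= (Nm *m Amat R j *m Mm) a b + (Nm *m (Emat i *m Amat R j) *m Mm) a b /\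
  (Nm *m Amat R j *m Mm) a b <= 2 /\ (Nm *m (Emat i *m Amat R j) *m Mm) a b <= 2.
Proof.
move=> ij; rewrite !mxE !big_ord_recr big_ord0 /= !mxE !big_ord_recr !big_ord0 /= !mxE.
rewrite !big_ord_recr !big_ord0 /= !mxE.
move: ij; case: i => [[|[|[|?]]] ?] //=; case: j => [[|[|[|?]]] ?] //=;
case: a => [[|[|[|?]]] ?] //=; case: b => [[|[|[|?]]] ?] //= _; lra.
Qed.


Lemma AmatE i : Amat R i = 1%:M + Emat i.
Proof.
apply/matrixP => a b; rewrite !mxE.
by case: i => [[|[|[|?]]] ?] //=; case: a => [[|[|[|?]]] ?] //=; case: b => [[|[|[|?]]] ?] //=;
  rewrite ?addr0 ?add0r.
Qed.

Lemma EE i : Emat i *m Emat i = 0.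
Proof.
apply/matrixP => a b; rewrite !mxE !big_ord_recr big_ord0 /= !mxE.
by case: i => [[|[|[|?]]] ?] //=; case: a => [[|[|[|?]]] ?] //=; case: b => [[|[|[|?]]] ?] //=;
  rewrite ?mulr0 ?mul0r ?addr0 ?add0r ?mulr1.
Qed.

Lemma Apow i n : Amat R i ^+ n = 1%:M + n%:R *: Emat i.
Proof.
elim: n => [|n IH]; first by rewrite expr0 scale0r addr0.
rewrite exprSr IH AmatE.
rewrite -[(_ + _) * _]/(mulmx _ _).
rewrite mulmxDl mul1mx mulmxDr mulmx1 -scalemxAl EE scaler0 addr0.
rewrite -addrA -[in RHS](addn1 n) natrD scalerDl scale1r.
by rewrite [Emat i + _]addrC.
Qed.

Lemma invM : invmx Mm = Nm.
Proof.
have [_ uM] := mulmx1_unit NM.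
by rewrite -[RHS](mulmxK uM) NM mul1mx.
Qed.

Lemma detApow i n : \det (Amat R i ^+ n) = 1.
Proof.
elim: n => [|n IH]; first by rewrite expr0 det1.
by rewrite exprSr -[(_ * _)]/(mulmx _ _) det_mulmx IH detA mulr1.
Qed.

Lemma Cform i j n :
  Nm *m (Amat R i ^+ n *m Amat R j) *m Mm =
  Nm *m Amat R j *m Mm + n%:R *: (Nm *m (Emat i *m Amat R j) *m Mm).
Proof.
rewrite Apow mulmxDl mul1mx mulmxDr mulmxDl; congr (_ + _).
rewrite -scalemxAl.
by rewrite -?scalemxAl -?scalemxAr -?scalemxAl -?scalemxAr.
Qed.

Lemma addscE (X Y : 'M[R]_3) (c : R) a b : (X + c *: Y) a b = X a b + c * Y a b.
Proof. by rewrite !mxE. Qed.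

Lemma mxmin_ge (C : 'M[R]_3) l : (forall a b, l <= C a b) -> l <= mxmin C.
Proof.
move=> H; rewrite /mxmin; elim/big_rec: _ => [|p x _ Hx]; first exact: H.
by rewrite le_min H Hx.
Qed.

Lemma mxmax_le (C : 'M[R]_3) l : (forall a b, C a b <= l) -> mxmax C <= l.
Proof.
move=> H; rewrite /mxmax; elim/big_rec: _ => [|p x _ Hx]; first exact: H.
by rewrite ge_max H Hx.
Qed.

Lemma mxmax_ge (C : 'M[R]_3) : C ord0 ord0 <= mxmax C.
Proof.
rewrite /mxmax; elim/big_rec: _ => [|p x _ Hx]; first exact: lexx.
by rewrite le_max Hx orbT.
Qed.

Lemma part2 : exists M : 'M[R]_3, M \in unitmx /\
    (forall B, @Gamma R B ->
       (forall j k, 0 < (invmx M *m B *m M) j k) /\ \det (invmx M *m B *m M) = 1) /\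
    exists c : R, 0 < c /\
      forall B, @Gamma R B ->
        c <= mxmin (invmx M *m B *m M) / mxmax (invmx M *m B *m M).
Proof.
have [_ uM] := mulmx1_unit NM.
have bnd : forall B, Gamma B -> exists n : R, 1 <= n /\
   forall a b, n / 20 <= (invmx Mm *m B *m Mm) a b /\ (invmx Mm *m B *m Mm) a b <= 4 * n.
  move=> B [i [j [n [ij [n0 ->]]]]]; exists n%:R; split.
    by rewrite ler1n.
  move=> a b; rewrite invM Cform addscE.
  have n1 : 1 <= n%:R :> R by rewrite ler1n.
  have [h1 [h2 [h3 h4]]] := entries a b ij.
  set C0 := (Nm *m Amat R j *m Mm) a b in h1 h2 h3 h4 *.
  set C1 := (Nm *m (Emat i *m Amat R j) *m Mm) a b in h1 h2 h3 h4 *.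
  have p1 : 0 <= (n%:R - 1) * (C1 - 1/20) by apply: mulr_ge0; lra.
  have p2 : 0 <= n%:R * (2 - C1) by apply: mulr_ge0; lra.
  split; lra.
exists Mm; split => //; split.
  move=> B GB; split.
    move=> a b; have [n [n1 Hn]] := bnd B GB; have [h _] := Hn a b.
    apply: lt_le_trans h; apply: divr_gt0 => //; lra.
  case: GB => i [j [n [_ [_ ->]]]].
  by rewrite invM !det_mulmx detApow detA !mul1r mulr1 -det_mulmx NM det1.
exists (1/80); split; first lra.
move=> B GB; have [n [n1 Hn]] := bnd B GB.
have hmin : n / 20 <= mxmin (invmx Mm *m B *m Mm).
  by apply: mxmin_ge => a b; case: (Hn a b).
have hmax : mxmax (invmx Mm *m B *m Mm) <= 4 * n.
  by apply: mxmax_le => a b; case: (Hn a b).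
have hmax0 : 0 < mxmax (invmx Mm *m B *m Mm).
  apply: lt_le_trans (mxmax_ge _); case: (Hn ord0 ord0) => h _.
  apply: lt_le_trans h; lra.
rewrite ler_pdivlMr //; lra.
Qed.
End P.

Theorem proposition6p5 (R : realType) :
  countable (@rauzy_gasket R `\` @K_Gamma R) /\
  exists M : 'M[R]_3, M \in unitmx /\
    (forall B, @Gamma R B ->
       (forall j k, 0 < (invmx M *m B *m M) j k) /\ \det (invmx M *m B *m M) = 1) /\
    exists c : R, 0 < c /\
      forall B, @Gamma R B ->
        c <= mxmin (invmx M *m B *m M) / mxmax (invmx M *m B *m M).
Proof.
split; [exact: part1 | exact: part2].
Qed.
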